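(* Let $n\ge 3$ and let $P=(A_1,\dots,A_n)$ be a cyclic $n$-gon in the plane (distinct vertices lying on a circle) whose vertices are ordered anticlockwise around the circle. Then for all $a,b\in\{1,\dots,n\}$ (including the cases $b=a$, $b=a+1$ and $b=a-1$), with all indices taken modulo $n$ in $\{1,\dots,n\}$, the following three determinants vanish: \[ \begin{vmatrix} x_{b,b+1} & S_{a,b,b+1} & S_{a+1,b,b+1}\\ -x_{a,a+1} & S_{a,a+1,b} & S_{a,a+1,b+1}\\ 0 & x_{a,b} & x_{a+1,b+1} \end{vmatrix} = 0,\qquad \begin{vmatrix} x_{b,b+1} & S_{a,b,b+1} & S_{a+1,b,b+1}\\ x_{a,a+1} & S_{a,a+1,b+1} & S_{a,a+1,b}\\ 0 & x_{a,b+1} & x_{a+1,b} \end{vmatrix} = 0,\] \[\begin{vmatrix} x_{a+1,b} & S_{a,a+1,b} & S_{a+1,b,b+1}\\ -x_{a,b+1} & S_{a,b,b+1} & S_{a,a+1,b+1}\\ 0 & x_{a,b} & x_{a+1,b+1} \end{vmatrix} = 0.\] (Equivalently: these determinants vanish for every diamond, including the gluing diamonds, of the plane polygonal Heronian frieze of $P$, the diamond for $(a,b)$ being the one associated with the quadruple of vertices $(A_a,A_{a+1},A_b,A_{b+1})$.)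
   Context: For points $A_p=(x_p,y_p)$ in the plane, $x_{pq}:=(x_q-x_p)^2+(y_q-y_p)^2$ is the squared distance between $A_p$ and $A_q$ (so $x_{pp}=0$), and $S_{pqr}:=2[(x_q-x_p)(y_r-y_p)-(y_q-y_p)(x_r-x_p)]$ is four times the signed area of the triangle $A_pA_qA_r$ (so it vanishes if two of $p,q,r$ coincide, and is positive for anticlockwise-ordered vertices). *)

(* Defs.v *)
From mathcomp Require Import all_boot all_order all_algebra.
Set Implicit Arguments. Unset Strict Implicit. Unset Printing Implicit Defensive.
Import Order.TTheory GRing.Theory Num.Theory.
Local Open Scope ring_scope.

Definition pt (R : realFieldType) := (R * R)%type.

Definition sqd (R : realFieldType) (p q : pt R) : R :=
  (q.1 - p.1) ^+ 2 + (q.2 - p.2) ^+ 2.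

(* S_{pqr} = four times the signed area *)
Definition S4 (R : realFieldType) (p q r : pt R) : R :=
  2 * ((q.1 - p.1) * (r.2 - p.2) - (q.2 - p.2) * (r.1 - p.1)).

(* successor of an index modulo n (indices 0..n-1 stand for 1..n) *)
Definition isucc (n : nat) (i : 'I_n.+1) : 'I_n.+1 := inord ((i.+1) %% n.+1).

Definition cyclic_polygon (R : realFieldType) (n : nat) (P : 'I_n.+1 -> pt R) :=
  injective P /\ exists (c : pt R) (r : R), 0 < r /\ forall i, sqd c (P i) = r ^+ 2.

Definition anticlockwise (R : realFieldType) (n : nat) (P : 'I_n.+1 -> pt R) :=
  forall i j k : 'I_n.+1, (i < j)%N -> (j < k)%N -> 0 < S4 (P i) (P j) (P k).

Definition det3 (R : realFieldType) (a11 a12 a13 a21 a22 a23 a31 a32 a33 : R) : R :=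
  \det (\matrix_(i < 3, j < 3)
          nth 0 (nth [::] [:: [:: a11; a12; a13]; [:: a21; a22; a23]; [:: a31; a32; a33]] i) j).

(* Main.v *)
Require Import Defs.
From mathcomp Require Import all_boot all_order all_algebra.
From mathcomp Require Import ring.
Import GRing.Theory.
Local Open Scope ring_scope.

Lemma det3E (R : realFieldType) (a11 a12 a13 a21 a22 a23 a31 a32 a33 : R) :
  det3 a11 a12 a13 a21 a22 a23 a31 a32 a33 =
  a11*(a22*a33-a23*a32) - a12*(a21*a33-a23*a31) + a13*(a21*a32-a22*a31).
Proof.
rewrite /det3 (expand_det_row _ 0) !big_ord_recr big_ord0 /=.
rewrite /cofactor !(expand_det_row _ 0) !big_ord_recr big_ord0 /= /cofactor.
rewrite !det_mx11 !mxE /= !big_ord0 expr0 expr1. ring.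
Qed.

Lemma key (R : realFieldType) (A A1 B B1 : pt R) (R2 : R) :
  A.1^+2 + A.2^+2 = R2 -> A1.1^+2 + A1.2^+2 = R2 ->
  B.1^+2 + B.2^+2 = R2 -> B1.1^+2 + B1.2^+2 = R2 ->
    [/\ det3 (sqd B B1) (S4 A B B1) (S4 A1 B B1)
             (- sqd A A1) (S4 A A1 B) (S4 A A1 B1)
             0 (sqd A B) (sqd A1 B1) = 0,
        det3 (sqd B B1) (S4 A B B1) (S4 A1 B B1)
             (sqd A A1) (S4 A A1 B1) (S4 A A1 B)
             0 (sqd A B1) (sqd A1 B) = 0 &
        det3 (sqd A1 B) (S4 A A1 B) (S4 A1 B B1)
             (- sqd A B1) (S4 A B B1) (S4 A A1 B1)
             0 (sqd A B) (sqd A1 B1) = 0].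
Proof.
case: A => u1 v1; case: A1 => u2 v2; case: B => u3 v3; case: B1 => u4 v4 /=.
move=> h1 h2 h3 h4.
have H1 : u1^+2+v1^+2-R2 = 0 by rewrite h1 subrr.
have H2 : u2^+2+v2^+2-R2 = 0 by rewrite h2 subrr.
have H3 : u3^+2+v3^+2-R2 = 0 by rewrite h3 subrr.
have H4 : u4^+2+v4^+2-R2 = 0 by rewrite h4 subrr.
rewrite !det3E /sqd /S4 /=; split.
- transitivity ((2%:R*u4*v3*R2 - 2%:R*u4*v3*v4^+2 + 2%:R*u4*v3^+3 - 2%:R*u4*v2*R2 + 2%:R*u4*v2*v4^+2 - 2%:R*u4*v2^+3 + 4%:R*u4*v1*v3*v4 - 6%:R*u4*v1*v3^+2 - 4%:R*u4*v1*v2*v4 + 6%:R*u4*v1*v2^+2 + 2%:R*u4*v1^+2*v3 - 2%:R*u4*v1^+2*v2 - 2%:R*u4^+3*v3 + 2%:R*u4^+3*v2 - 2%:R*u3*v4*R2 - 2%:R*u3*v4^+3 + 8%:R*u3*v3*v4^+2 - 6%:R*u3*v3^+2*v4 + 2%:R*u3*v2*R2 - 8%:R*u3*v2*v3*v4 + 6%:R*u3*v2*v3^+2 + 2%:R*u3*v2^+3 - 2%:R*u3*v1*v4^+2 + 4%:R*u3*v1*v3*v4 + 8%:R*u3*v1*v2*v4 - 4%:R*u3*v1*v2*v3 - 6%:R*u3*v1*v2^+2 - 2%:R*u3*v1^+2*v4 + 2%:R*u3*v1^+2*v2 - 2%:R*u3*u4^+2*v4 + 2%:R*u3*u4^+2*v1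 + 8%:R*u3^+2*u4*v4 + 2%:R*u3^+2*u4*v3 - 8%:R*u3^+2*u4*v2 - 2%:R*u3^+2*u4*v1 - 6%:R*u3^+3*v4 + 6%:R*u3^+3*v2 + 2%:R*u2*v4*R2 + 2%:R*u2*v4^+3 - 2%:R*u2*v3*R2 - 2%:R*u2*v3^+3 - 8%:R*u2*v2*v4^+2 + 8%:R*u2*v2*v3*v4 + 6%:R*u2*v2^+2*v4 - 6%:R*u2*v2^+2*v3 + 2%:R*u2*v1*v4^+2 - 8%:R*u2*v1*v3*v4 + 6%:R*u2*v1*v3^+2 - 4%:R*u2*v1*v2*v4 + 4%:R*u2*v1*v2*v3 + 2%:R*u2*v1^+2*v4 - 2%:R*u2*v1^+2*v3 + 2%:R*u2*u4^+2*v4 - 2%:R*u2*u4^+2*v1 + 8%:R*u2*u3*u4*v3 - 8%:R*u2*u3*u4*v2 - 8%:R*u2*u3^+2*v4 - 2%:R*u2*u3^+2*v3 + 8%:R*u2*u3^+2*v2 + 2%:R*u2*u3^+2*v1 - 8%:R*u2^+2*u4*v4 + 8%:R*u2^+2*u4*v3 - 2%:R*u2^+2*u4*v2 + 2%:R*u2^+2*u4*v1 + 8%:R*u2^+2*u3*v4 - 8%:R*u2^+2*u3*v3 + 2%:R*u2^+2*u3*v2 - 2%:R*u2^+2*u3*v1 + 6%:R*u2^+3*v4 - 6%:R*u2^+3*v3 - 2%:R*u1*v3*v4^+2 + 2%:R*u1*v3^+2*v4 + 2%:R*u1*v2*v4^+2 - 2%:R*u1*v2*v3^+2 - 2%:R*u1*v2^+2*v4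 + 2%:R*u1*v2^+2*v3 + 2%:R*u1*u4^+2*v3 - 2%:R*u1*u4^+2*v2 - 4%:R*u1*u3*u4*v4 - 4%:R*u1*u3*u4*v3 + 8%:R*u1*u3*u4*v2 + 6%:R*u1*u3^+2*v4 - 6%:R*u1*u3^+2*v2 + 4%:R*u1*u2*u4*v4 - 8%:R*u1*u2*u4*v3 + 4%:R*u1*u2*u4*v2 + 4%:R*u1*u2*u3*v3 - 4%:R*u1*u2*u3*v2 - 6%:R*u1*u2^+2*v4 + 6%:R*u1*u2^+2*v3 + 2%:R*u1^+2*u4*v3 - 2%:R*u1^+2*u4*v2 - 2%:R*u1^+2*u3*v4 + 2%:R*u1^+2*u3*v2 + 2%:R*u1^+2*u2*v4 - 2%:R*u1^+2*u2*v3) * (u1^+2+v1^+2-R2) + (- 8%:R*u4*v4*R2 + 6%:R*u4*v3*R2 - 6%:R*u4*v3*v4^+2 + 8%:R*u4*v3^+2*v4 - 2%:R*u4*v3^+3 - 2%:R*u4*v2*R2 + 4%:R*u4*v2*v3*v4 - 2%:R*u4*v2*v3^+2 - 2%:R*u4*v2^+2*v3 + 4%:R*u4*v1*R2 + 6%:R*u4*v1*v4^+2 - 8%:R*u4*v1*v3*v4 - 4%:R*u4*v1*v2*v4 + 8%:R*u4*v1*v2*v3 + 2%:R*u4*v1*v2^+2 + 8%:R*u4*v1^+2*v4 - 8%:R*u4*v1^+2*v3 - 4%:R*u4*v1^+2*v2 - 6%:R*u4^+3*v3 + 6%:R*u4^+3*v1 + 10%:R*u3*v4*R2 + 2%:R*u3*v4^+3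 - 8%:R*u3*v3*R2 - 2%:R*u3*v3^+2*v4 + 2%:R*u3*v2*R2 - 6%:R*u3*v2*v4^+2 + 4%:R*u3*v2*v3*v4 + 2%:R*u3*v2^+2*v4 - 4%:R*u3*v1*R2 + 2%:R*u3*v1*v3^+2 - 4%:R*u3*v1*v2*v3 - 2%:R*u3*v1*v2^+2 - 8%:R*u3*v1^+2*v4 + 8%:R*u3*v1^+2*v3 + 4%:R*u3*v1^+2*v2 + 2%:R*u3*u4^+2*v4 + 8%:R*u3*u4^+2*v3 - 2%:R*u3*u4^+2*v2 - 8%:R*u3*u4^+2*v1 - 2%:R*u3^+2*u4*v3 + 2%:R*u3^+2*u4*v2 - 2%:R*u3^+3*v4 + 2%:R*u3^+3*v1 + 6%:R*u2*v4*R2 - 6%:R*u2*v3*R2 + 2%:R*u2*v3*v4^+2 - 2%:R*u2*v3^+2*v4 - 2%:R*u2*v1*v4^+2 + 2%:R*u2*v1*v3^+2 - 4%:R*u2*v1^+2*v4 + 4%:R*u2*v1^+2*v3 + 6%:R*u2*u4^+2*v3 - 6%:R*u2*u4^+2*v1 - 4%:R*u2*u3*u4*v4 - 4%:R*u2*u3*u4*v3 + 8%:R*u2*u3*u4*v1 + 2%:R*u2*u3^+2*v4 - 2%:R*u2*u3^+2*v1 - 2%:R*u2^+2*u4*v3 + 2%:R*u2^+2*u4*v1 + 2%:R*u2^+2*u3*v4 - 2%:R*u2^+2*u3*v1 - 8%:R*u1*v4*R2 - 2%:R*u1*v4^+3 + 8%:R*u1*v3*R2 + 2%:R*u1*v3^+3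 + 6%:R*u1*v2*v4^+2 - 8%:R*u1*v2*v3*v4 + 2%:R*u1*v2*v3^+2 - 2%:R*u1*v2^+2*v4 + 2%:R*u1*v2^+2*v3 + 8%:R*u1*v1*v3*v4 - 8%:R*u1*v1*v3^+2 + 4%:R*u1*v1*v2*v4 - 4%:R*u1*v1*v2*v3 - 2%:R*u1*u4^+2*v4 - 8%:R*u1*u4^+2*v3 + 2%:R*u1*u4^+2*v2 + 8%:R*u1*u4^+2*v1 + 8%:R*u1*u3*u4*v4 - 8%:R*u1*u3*u4*v1 + 2%:R*u1*u3^+2*v3 - 2%:R*u1*u3^+2*v2 + 4%:R*u1*u2*u4*v4 - 4%:R*u1*u2*u4*v1 - 8%:R*u1*u2*u3*v4 + 4%:R*u1*u2*u3*v3 + 4%:R*u1*u2*u3*v1 - 2%:R*u1*u2^+2*v4 + 2%:R*u1*u2^+2*v3) * (u2^+2+v2^+2-R2) + (8%:R*u4*v4*R2 - 4%:R*u4*v2*R2 + 6%:R*u4*v2*v4^+2 - 4%:R*u4*v2*v3*v4 + 2%:R*u4*v2*v3^+2 - 8%:R*u4*v2^+2*v4 + 4%:R*u4*v2^+2*v3 - 4%:R*u4*v1*R2 - 6%:R*u4*v1*v4^+2 + 4%:R*u4*v1*v3*v4 - 2%:R*u4*v1*v3^+2 + 8%:R*u4*v1*v2*v4 - 8%:R*u4*v1*v2*v3 - 8%:R*u4*v1^+2*v4 + 4%:R*u4*v1^+2*v3 + 8%:R*u4*v1^+2*v2 + 6%:R*u4^+3*v2 - 6%:R*u4^+3*v1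 - 8%:R*u3*v4*R2 + 6%:R*u3*v2*R2 - 2%:R*u3*v2*v4^+2 + 4%:R*u3*v2^+2*v4 + 2%:R*u3*v1*R2 + 2%:R*u3*v1*v4^+2 - 4%:R*u3*v1*v2^+2 + 4%:R*u3*v1^+2*v4 - 4%:R*u3*v1^+2*v2 - 6%:R*u3*u4^+2*v2 + 6%:R*u3*u4^+2*v1 + 2%:R*u3^+2*u4*v2 - 2%:R*u3^+2*u4*v1 - 8%:R*u2*v4*R2 - 2%:R*u2*v4^+3 - 2%:R*u2*v3*R2 + 6%:R*u2*v3*v4^+2 - 2%:R*u2*v3^+2*v4 + 8%:R*u2*v2*R2 - 4%:R*u2*v2*v3*v4 + 2%:R*u2*v1*R2 + 2%:R*u2*v1*v3^+2 + 4%:R*u2*v1*v2*v3 + 8%:R*u2*v1^+2*v4 - 4%:R*u2*v1^+2*v3 - 8%:R*u2*v1^+2*v2 - 2%:R*u2*u4^+2*v4 + 2%:R*u2*u4^+2*v3 - 8%:R*u2*u4^+2*v2 + 8%:R*u2*u4^+2*v1 + 4%:R*u2*u3*u4*v4 + 4%:R*u2*u3*u4*v2 - 8%:R*u2*u3*u4*v1 - 2%:R*u2*u3^+2*v4 + 2%:R*u2*u3^+2*v1 + 8%:R*u1*v4*R2 + 2%:R*u1*v4^+3 + 2%:R*u1*v3*R2 - 6%:R*u1*v3*v4^+2 + 2%:R*u1*v3^+2*v4 - 10%:R*u1*v2*R2 + 8%:R*u1*v2*v3*v4 - 2%:R*u1*v2*v3^+2 - 4%:R*u1*v2^+2*v3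 - 4%:R*u1*v1*v3*v4 - 8%:R*u1*v1*v2*v4 + 4%:R*u1*v1*v2*v3 + 8%:R*u1*v1*v2^+2 + 2%:R*u1*u4^+2*v4 - 2%:R*u1*u4^+2*v3 + 8%:R*u1*u4^+2*v2 - 8%:R*u1*u4^+2*v1 - 4%:R*u1*u3*u4*v4 + 4%:R*u1*u3*u4*v1 + 2%:R*u1*u3^+2*v4 - 2%:R*u1*u3^+2*v2 - 8%:R*u1*u2*u4*v4 + 8%:R*u1*u2*u4*v1 + 8%:R*u1*u2*u3*v4 - 4%:R*u1*u2*u3*v2 - 4%:R*u1*u2*u3*v1) * (u3^+2+v3^+2-R2) + (- 8%:R*u4*v3*R2 + 8%:R*u4*v2*R2 - 4%:R*u4*v2*v3^+2 + 4%:R*u4*v2^+2*v3 + 4%:R*u4*v1*v3^+2 - 4%:R*u4*v1*v2^+2 + 4%:R*u4*v1^+2*v3 - 4%:R*u4*v1^+2*v2 + 8%:R*u3*v3*R2 - 10%:R*u3*v2*R2 - 2%:R*u3*v2*v4^+2 + 4%:R*u3*v2*v3*v4 + 4%:R*u3*v2^+2*v4 - 8%:R*u3*v2^+2*v3 + 2%:R*u3*v1*R2 + 2%:R*u3*v1*v4^+2 - 4%:R*u3*v1*v3*v4 - 8%:R*u3*v1*v2*v4 + 8%:R*u3*v1*v2*v3 + 8%:R*u3*v1*v2^+2 + 4%:R*u3*v1^+2*v4 - 8%:R*u3*v1^+2*v3 - 2%:R*u3*u4^+2*v2 + 2%:R*u3*u4^+2*v1 + 10%:R*u2*v3*R2 +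 2%:R*u2*v3*v4^+2 - 4%:R*u2*v3^+2*v4 - 8%:R*u2*v2*R2 - 4%:R*u2*v2*v3*v4 + 8%:R*u2*v2*v3^+2 - 2%:R*u2*v1*R2 - 2%:R*u2*v1*v4^+2 + 8%:R*u2*v1*v3*v4 - 8%:R*u2*v1*v3^+2 + 4%:R*u2*v1*v2*v4 - 8%:R*u2*v1*v2*v3 - 4%:R*u2*v1^+2*v4 + 8%:R*u2*v1^+2*v2 + 2%:R*u2*u4^+2*v3 - 2%:R*u2*u4^+2*v1 - 4%:R*u2*u3*u4*v3 + 4%:R*u2*u3*u4*v2 - 10%:R*u1*v3*R2 - 2%:R*u1*v3*v4^+2 + 4%:R*u1*v3^+2*v4 + 10%:R*u1*v2*R2 + 2%:R*u1*v2*v4^+2 - 8%:R*u1*v2*v3^+2 - 4%:R*u1*v2^+2*v4 + 8%:R*u1*v2^+2*v3 - 4%:R*u1*v1*v3*v4 + 8%:R*u1*v1*v3^+2 + 4%:R*u1*v1*v2*v4 - 8%:R*u1*v1*v2^+2 - 2%:R*u1*u4^+2*v3 + 2%:R*u1*u4^+2*v2 + 4%:R*u1*u3*u4*v3 - 8%:R*u1*u3*u4*v2 + 4%:R*u1*u3*u4*v1 + 8%:R*u1*u2*u4*v3 - 4%:R*u1*u2*u4*v2 - 4%:R*u1*u2*u4*v1 - 8%:R*u1*u2*u3*v3 + 8%:R*u1*u2*u3*v2) * (u4^+2+v4^+2-R2)); [ring | rewrite H1 H2 H3 H4; ring].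
- transitivity ((- 2%:R*u4*v3*R2 - 6%:R*u4*v3*v4^+2 + 8%:R*u4*v3^+2*v4 - 2%:R*u4*v3^+3 + 2%:R*u4*v2*R2 + 6%:R*u4*v2*v4^+2 - 8%:R*u4*v2*v3*v4 + 2%:R*u4*v2^+3 + 4%:R*u4*v1*v3*v4 - 2%:R*u4*v1*v3^+2 - 4%:R*u4*v1*v2*v4 + 8%:R*u4*v1*v2*v3 - 6%:R*u4*v1*v2^+2 - 2%:R*u4*v1^+2*v3 + 2%:R*u4*v1^+2*v2 - 6%:R*u4^+3*v3 + 6%:R*u4^+3*v2 + 2%:R*u3*v4*R2 + 2%:R*u3*v4^+3 - 2%:R*u3*v3^+2*v4 - 2%:R*u3*v2*R2 + 2%:R*u3*v2*v3^+2 - 2%:R*u3*v2^+3 - 6%:R*u3*v1*v4^+2 + 4%:R*u3*v1*v3*v4 - 4%:R*u3*v1*v2*v3 + 6%:R*u3*v1*v2^+2 + 2%:R*u3*v1^+2*v4 - 2%:R*u3*v1^+2*v2 + 2%:R*u3*u4^+2*v4 + 8%:R*u3*u4^+2*v3 - 8%:R*u3*u4^+2*v2 - 2%:R*u3*u4^+2*v1 - 2%:R*u3^+2*u4*v3 + 2%:R*u3^+2*u4*v1 - 2%:R*u3^+3*v4 + 2%:R*u3^+3*v2 - 2%:R*u2*v4*R2 - 2%:R*u2*v4^+3 + 2%:R*u2*v3*R2 + 2%:R*u2*v3^+3 + 8%:R*u2*v2*v3*v4 - 8%:R*u2*v2*v3^+2 - 6%:R*u2*v2^+2*v4 + 6%:R*u2*v2^+2*v3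 + 6%:R*u2*v1*v4^+2 - 8%:R*u2*v1*v3*v4 + 2%:R*u2*v1*v3^+2 + 4%:R*u2*v1*v2*v4 - 4%:R*u2*v1*v2*v3 - 2%:R*u2*v1^+2*v4 + 2%:R*u2*v1^+2*v3 - 2%:R*u2*u4^+2*v4 - 8%:R*u2*u4^+2*v3 + 8%:R*u2*u4^+2*v2 + 2%:R*u2*u4^+2*v1 + 8%:R*u2*u3*u4*v4 - 8%:R*u2*u3*u4*v2 + 2%:R*u2*u3^+2*v3 - 2%:R*u2*u3^+2*v1 - 8%:R*u2^+2*u4*v4 + 8%:R*u2^+2*u4*v3 + 2%:R*u2^+2*u4*v2 - 2%:R*u2^+2*u4*v1 + 8%:R*u2^+2*u3*v4 - 8%:R*u2^+2*u3*v3 - 2%:R*u2^+2*u3*v2 + 2%:R*u2^+2*u3*v1 - 6%:R*u2^+3*v4 + 6%:R*u2^+3*v3 + 2%:R*u1*v3*v4^+2 - 2%:R*u1*v3^+2*v4 - 2%:R*u1*v2*v4^+2 + 2%:R*u1*v2*v3^+2 + 2%:R*u1*v2^+2*v4 - 2%:R*u1*v2^+2*v3 + 6%:R*u1*u4^+2*v3 - 6%:R*u1*u4^+2*v2 - 4%:R*u1*u3*u4*v4 - 4%:R*u1*u3*u4*v3 + 8%:R*u1*u3*u4*v2 + 2%:R*u1*u3^+2*v4 - 2%:R*u1*u3^+2*v2 + 4%:R*u1*u2*u4*v4 - 4%:R*u1*u2*u4*v2 - 8%:R*u1*u2*u3*v4 + 4%:R*u1*u2*u3*v3 + 4%:R*u1*u2*u3*v2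 + 6%:R*u1*u2^+2*v4 - 6%:R*u1*u2^+2*v3 - 2%:R*u1^+2*u4*v3 + 2%:R*u1^+2*u4*v2 + 2%:R*u1^+2*u3*v4 - 2%:R*u1^+2*u3*v2 - 2%:R*u1^+2*u2*v4 + 2%:R*u1^+2*u2*v3) * (u1^+2+v1^+2-R2) + (- 8%:R*u4*v4*R2 + 10%:R*u4*v3*R2 - 2%:R*u4*v3*v4^+2 + 2%:R*u4*v3^+3 + 2%:R*u4*v2*R2 + 4%:R*u4*v2*v3*v4 - 6%:R*u4*v2*v3^+2 + 2%:R*u4*v2^+2*v3 - 4%:R*u4*v1*R2 + 2%:R*u4*v1*v4^+2 - 4%:R*u4*v1*v2*v4 - 2%:R*u4*v1*v2^+2 + 8%:R*u4*v1^+2*v4 - 8%:R*u4*v1^+2*v3 + 4%:R*u4*v1^+2*v2 - 2%:R*u4^+3*v3 + 2%:R*u4^+3*v1 + 6%:R*u3*v4*R2 - 2%:R*u3*v4^+3 - 8%:R*u3*v3*R2 + 8%:R*u3*v3*v4^+2 - 6%:R*u3*v3^+2*v4 - 2%:R*u3*v2*R2 - 2%:R*u3*v2*v4^+2 + 4%:R*u3*v2*v3*v4 - 2%:R*u3*v2^+2*v4 + 4%:R*u3*v1*R2 - 8%:R*u3*v1*v3*v4 + 6%:R*u3*v1*v3^+2 + 8%:R*u3*v1*v2*v4 - 4%:R*u3*v1*v2*v3 + 2%:R*u3*v1*v2^+2 - 8%:R*u3*v1^+2*v4 + 8%:R*u3*v1^+2*v3 - 4%:R*u3*v1^+2*v2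 - 2%:R*u3*u4^+2*v4 + 2%:R*u3*u4^+2*v2 + 8%:R*u3^+2*u4*v4 + 2%:R*u3^+2*u4*v3 - 2%:R*u3^+2*u4*v2 - 8%:R*u3^+2*u4*v1 - 6%:R*u3^+3*v4 + 6%:R*u3^+3*v1 - 6%:R*u2*v4*R2 + 6%:R*u2*v3*R2 - 2%:R*u2*v3*v4^+2 + 2%:R*u2*v3^+2*v4 + 2%:R*u2*v1*v4^+2 - 2%:R*u2*v1*v3^+2 + 4%:R*u2*v1^+2*v4 - 4%:R*u2*v1^+2*v3 + 2%:R*u2*u4^+2*v3 - 2%:R*u2*u4^+2*v1 - 4%:R*u2*u3*u4*v4 - 4%:R*u2*u3*u4*v3 + 8%:R*u2*u3*u4*v1 + 6%:R*u2*u3^+2*v4 - 6%:R*u2*u3^+2*v1 + 2%:R*u2^+2*u4*v3 - 2%:R*u2^+2*u4*v1 - 2%:R*u2^+2*u3*v4 + 2%:R*u2^+2*u3*v1 + 8%:R*u1*v4*R2 + 2%:R*u1*v4^+3 - 8%:R*u1*v3*R2 - 2%:R*u1*v3^+3 + 2%:R*u1*v2*v4^+2 - 8%:R*u1*v2*v3*v4 + 6%:R*u1*v2*v3^+2 + 2%:R*u1*v2^+2*v4 - 2%:R*u1*v2^+2*v3 - 8%:R*u1*v1*v4^+2 + 8%:R*u1*v1*v3*v4 - 4%:R*u1*v1*v2*v4 + 4%:R*u1*v1*v2*v3 + 2%:R*u1*u4^+2*v4 - 2%:R*u1*u4^+2*v2 + 8%:R*u1*u3*u4*v3 - 8%:R*u1*u3*u4*v1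 - 8%:R*u1*u3^+2*v4 - 2%:R*u1*u3^+2*v3 + 2%:R*u1*u3^+2*v2 + 8%:R*u1*u3^+2*v1 + 4%:R*u1*u2*u4*v4 - 8%:R*u1*u2*u4*v3 + 4%:R*u1*u2*u4*v1 + 4%:R*u1*u2*u3*v3 - 4%:R*u1*u2*u3*v1 + 2%:R*u1*u2^+2*v4 - 2%:R*u1*u2^+2*v3) * (u2^+2+v2^+2-R2) + (8%:R*u4*v4*R2 - 4%:R*u4*v2*R2 - 6%:R*u4*v2*v4^+2 + 4%:R*u4*v2*v3*v4 - 2%:R*u4*v2*v3^+2 - 8%:R*u4*v2^+2*v4 + 4%:R*u4*v2^+2*v3 - 4%:R*u4*v1*R2 + 6%:R*u4*v1*v4^+2 - 4%:R*u4*v1*v3*v4 + 2%:R*u4*v1*v3^+2 + 8%:R*u4*v1*v2*v4 - 8%:R*u4*v1*v2*v3 + 8%:R*u4*v1*v2^+2 - 8%:R*u4*v1^+2*v4 + 4%:R*u4*v1^+2*v3 - 6%:R*u4^+3*v2 + 6%:R*u4^+3*v1 - 8%:R*u3*v4*R2 + 2%:R*u3*v2*R2 + 2%:R*u3*v2*v4^+2 + 4%:R*u3*v2^+2*v4 + 6%:R*u3*v1*R2 - 2%:R*u3*v1*v4^+2 - 4%:R*u3*v1*v2^+2 + 4%:R*u3*v1^+2*v4 - 4%:R*u3*v1^+2*v2 + 6%:R*u3*u4^+2*v2 - 6%:R*u3*u4^+2*v1 - 2%:R*u3^+2*u4*v2 + 2%:R*u3^+2*u4*v1 + 8%:R*u2*v4*R2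 + 2%:R*u2*v4^+3 + 2%:R*u2*v3*R2 - 6%:R*u2*v3*v4^+2 + 2%:R*u2*v3^+2*v4 - 4%:R*u2*v2*v3*v4 - 10%:R*u2*v1*R2 + 8%:R*u2*v1*v3*v4 - 2%:R*u2*v1*v3^+2 - 8%:R*u2*v1*v2*v4 + 4%:R*u2*v1*v2*v3 - 4%:R*u2*v1^+2*v3 + 8%:R*u2*v1^+2*v2 + 2%:R*u2*u4^+2*v4 - 2%:R*u2*u4^+2*v3 - 8%:R*u2*u4^+2*v2 + 8%:R*u2*u4^+2*v1 - 4%:R*u2*u3*u4*v4 + 4%:R*u2*u3*u4*v2 + 2%:R*u2*u3^+2*v4 - 2%:R*u2*u3^+2*v1 - 8%:R*u1*v4*R2 - 2%:R*u1*v4^+3 - 2%:R*u1*v3*R2 + 6%:R*u1*v3*v4^+2 - 2%:R*u1*v3^+2*v4 + 2%:R*u1*v2*R2 + 2%:R*u1*v2*v3^+2 + 8%:R*u1*v2^+2*v4 - 4%:R*u1*v2^+2*v3 + 8%:R*u1*v1*R2 - 4%:R*u1*v1*v3*v4 + 4%:R*u1*v1*v2*v3 - 8%:R*u1*v1*v2^+2 - 2%:R*u1*u4^+2*v4 + 2%:R*u1*u4^+2*v3 + 8%:R*u1*u4^+2*v2 - 8%:R*u1*u4^+2*v1 + 4%:R*u1*u3*u4*v4 - 8%:R*u1*u3*u4*v2 + 4%:R*u1*u3*u4*v1 - 2%:R*u1*u3^+2*v4 + 2%:R*u1*u3^+2*v2 - 8%:R*u1*u2*u4*v4 + 8%:R*u1*u2*u4*v2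 + 8%:R*u1*u2*u3*v4 - 4%:R*u1*u2*u3*v2 - 4%:R*u1*u2*u3*v1) * (u3^+2+v3^+2-R2) + (- 8%:R*u4*v3*R2 + 4%:R*u4*v2*v3^+2 + 4%:R*u4*v2^+2*v3 + 8%:R*u4*v1*R2 - 4%:R*u4*v1*v3^+2 - 4%:R*u4*v1*v2^+2 + 4%:R*u4*v1^+2*v3 - 4%:R*u4*v1^+2*v2 + 8%:R*u3*v3*R2 + 2%:R*u3*v2*R2 + 2%:R*u3*v2*v4^+2 - 4%:R*u3*v2*v3*v4 + 4%:R*u3*v2^+2*v4 - 8%:R*u3*v2^+2*v3 - 10%:R*u3*v1*R2 - 2%:R*u3*v1*v4^+2 + 4%:R*u3*v1*v3*v4 - 8%:R*u3*v1*v2*v4 + 8%:R*u3*v1*v2*v3 + 4%:R*u3*v1^+2*v4 - 8%:R*u3*v1^+2*v3 + 8%:R*u3*v1^+2*v2 + 2%:R*u3*u4^+2*v2 - 2%:R*u3*u4^+2*v1 - 10%:R*u2*v3*R2 - 2%:R*u2*v3*v4^+2 + 4%:R*u2*v3^+2*v4 - 4%:R*u2*v2*v3*v4 + 8%:R*u2*v2*v3^+2 + 10%:R*u2*v1*R2 + 2%:R*u2*v1*v4^+2 - 8%:R*u2*v1*v3^+2 + 4%:R*u2*v1*v2*v4 - 4%:R*u2*v1^+2*v4 + 8%:R*u2*v1^+2*v3 - 8%:R*u2*v1^+2*v2 - 2%:R*u2*u4^+2*v3 + 2%:R*u2*u4^+2*v1 + 4%:R*u2*u3*u4*v3 + 4%:R*u2*u3*u4*v2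 - 8%:R*u2*u3*u4*v1 + 10%:R*u1*v3*R2 + 2%:R*u1*v3*v4^+2 - 4%:R*u1*v3^+2*v4 - 2%:R*u1*v2*R2 - 2%:R*u1*v2*v4^+2 + 8%:R*u1*v2*v3*v4 - 8%:R*u1*v2*v3^+2 - 4%:R*u1*v2^+2*v4 - 8%:R*u1*v1*R2 - 4%:R*u1*v1*v3*v4 + 8%:R*u1*v1*v3^+2 + 4%:R*u1*v1*v2*v4 - 8%:R*u1*v1*v2*v3 + 8%:R*u1*v1*v2^+2 + 2%:R*u1*u4^+2*v3 - 2%:R*u1*u4^+2*v2 - 4%:R*u1*u3*u4*v3 + 4%:R*u1*u3*u4*v1 + 8%:R*u1*u2*u4*v3 - 4%:R*u1*u2*u4*v2 - 4%:R*u1*u2*u4*v1 - 8%:R*u1*u2*u3*v3 + 8%:R*u1*u2*u3*v1) * (u4^+2+v4^+2-R2)); [ring | rewrite H1 H2 H3 H4; ring].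
- transitivity ((2%:R*u4*v3*R2 + 6%:R*u4*v3*v4^+2 + 2%:R*u4*v3^+3 - 2%:R*u4*v2*R2 - 6%:R*u4*v2*v4^+2 - 8%:R*u4*v2*v3*v4 + 8%:R*u4*v2^+2*v4 - 2%:R*u4*v2^+3 - 4%:R*u4*v1*v3*v4 - 6%:R*u4*v1*v3^+2 + 4%:R*u4*v1*v2*v4 + 8%:R*u4*v1*v2*v3 - 2%:R*u4*v1*v2^+2 + 2%:R*u4*v1^+2*v3 - 2%:R*u4*v1^+2*v2 + 6%:R*u4^+3*v3 - 6%:R*u4^+3*v2 - 2%:R*u3*v4*R2 - 2%:R*u3*v4^+3 - 6%:R*u3*v3^+2*v4 + 2%:R*u3*v2*R2 + 8%:R*u3*v2*v3*v4 + 6%:R*u3*v2*v3^+2 - 8%:R*u3*v2^+2*v3 + 2%:R*u3*v2^+3 + 6%:R*u3*v1*v4^+2 + 4%:R*u3*v1*v3*v4 - 8%:R*u3*v1*v2*v4 - 4%:R*u3*v1*v2*v3 + 2%:R*u3*v1*v2^+2 - 2%:R*u3*v1^+2*v4 + 2%:R*u3*v1^+2*v2 - 2%:R*u3*u4^+2*v4 + 8%:R*u3*u4^+2*v3 - 8%:R*u3*u4^+2*v2 + 2%:R*u3*u4^+2*v1 - 8%:R*u3^+2*u4*v4 + 2%:R*u3^+2*u4*v3 + 8%:R*u3^+2*u4*v2 - 2%:R*u3^+2*u4*v1 - 6%:R*u3^+3*v4 + 6%:R*u3^+3*v2 + 2%:R*u2*v4*R2 + 2%:R*u2*v4^+3 -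 2%:R*u2*v3*R2 - 2%:R*u2*v3^+3 - 2%:R*u2*v2^+2*v4 + 2%:R*u2*v2^+2*v3 - 6%:R*u2*v1*v4^+2 + 6%:R*u2*v1*v3^+2 + 4%:R*u2*v1*v2*v4 - 4%:R*u2*v1*v2*v3 + 2%:R*u2*v1^+2*v4 - 2%:R*u2*v1^+2*v3 + 2%:R*u2*u4^+2*v4 - 8%:R*u2*u4^+2*v3 + 8%:R*u2*u4^+2*v2 - 2%:R*u2*u4^+2*v1 + 8%:R*u2*u3*u4*v4 - 8%:R*u2*u3*u4*v3 + 8%:R*u2*u3^+2*v4 - 2%:R*u2*u3^+2*v3 - 8%:R*u2*u3^+2*v2 + 2%:R*u2*u3^+2*v1 - 2%:R*u2^+2*u4*v2 + 2%:R*u2^+2*u4*v1 + 2%:R*u2^+2*u3*v2 - 2%:R*u2^+2*u3*v1 - 2%:R*u2^+3*v4 + 2%:R*u2^+3*v3 - 2%:R*u1*v3*v4^+2 + 2%:R*u1*v3^+2*v4 + 2%:R*u1*v2*v4^+2 - 2%:R*u1*v2*v3^+2 - 2%:R*u1*v2^+2*v4 + 2%:R*u1*v2^+2*v3 - 6%:R*u1*u4^+2*v3 + 6%:R*u1*u4^+2*v2 + 4%:R*u1*u3*u4*v4 - 4%:R*u1*u3*u4*v3 + 6%:R*u1*u3^+2*v4 - 6%:R*u1*u3^+2*v2 - 4%:R*u1*u2*u4*v4 + 8%:R*u1*u2*u4*v3 - 4%:R*u1*u2*u4*v2 - 8%:R*u1*u2*u3*v4 + 4%:R*u1*u2*u3*v3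 + 4%:R*u1*u2*u3*v2 + 2%:R*u1*u2^+2*v4 - 2%:R*u1*u2^+2*v3 + 2%:R*u1^+2*u4*v3 - 2%:R*u1^+2*u4*v2 - 2%:R*u1^+2*u3*v4 + 2%:R*u1^+2*u3*v2 + 2%:R*u1^+2*u2*v4 - 2%:R*u1^+2*u2*v3) * (u1^+2+v1^+2-R2) + (- 2%:R*u4*v3*R2 - 6%:R*u4*v3*v4^+2 - 2%:R*u4*v3^+3 - 2%:R*u4*v2*R2 + 4%:R*u4*v2*v3*v4 + 6%:R*u4*v2*v3^+2 - 2%:R*u4*v2^+2*v3 + 4%:R*u4*v1*R2 + 6%:R*u4*v1*v4^+2 + 8%:R*u4*v1*v3*v4 - 4%:R*u4*v1*v2*v4 - 8%:R*u4*v1*v2*v3 + 2%:R*u4*v1*v2^+2 - 8%:R*u4*v1^+2*v4 + 4%:R*u4*v1^+2*v2 - 6%:R*u4^+3*v3 + 6%:R*u4^+3*v1 + 2%:R*u3*v4*R2 + 2%:R*u3*v4^+3 + 6%:R*u3*v3^+2*v4 + 2%:R*u3*v2*R2 - 6%:R*u3*v2*v4^+2 - 4%:R*u3*v2*v3*v4 + 2%:R*u3*v2^+2*v4 - 4%:R*u3*v1*R2 - 8%:R*u3*v1*v3*v4 - 6%:R*u3*v1*v3^+2 + 8%:R*u3*v1*v2*v4 + 4%:R*u3*v1*v2*v3 - 2%:R*u3*v1*v2^+2 + 8%:R*u3*v1^+2*v3 - 4%:R*u3*v1^+2*v2 + 2%:R*u3*u4^+2*v4 - 8%:R*u3*u4^+2*v3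 - 2%:R*u3*u4^+2*v2 + 8%:R*u3*u4^+2*v1 + 8%:R*u3^+2*u4*v4 - 2%:R*u3^+2*u4*v3 + 2%:R*u3^+2*u4*v2 - 8%:R*u3^+2*u4*v1 + 6%:R*u3^+3*v4 - 6%:R*u3^+3*v1 - 2%:R*u2*v4*R2 + 2%:R*u2*v3*R2 + 2%:R*u2*v3*v4^+2 - 2%:R*u2*v3^+2*v4 - 2%:R*u2*v1*v4^+2 + 2%:R*u2*v1*v3^+2 + 4%:R*u2*v1^+2*v4 - 4%:R*u2*v1^+2*v3 + 6%:R*u2*u4^+2*v3 - 6%:R*u2*u4^+2*v1 - 4%:R*u2*u3*u4*v4 + 4%:R*u2*u3*u4*v3 - 6%:R*u2*u3^+2*v4 + 6%:R*u2*u3^+2*v1 - 2%:R*u2^+2*u4*v3 + 2%:R*u2^+2*u4*v1 + 2%:R*u2^+2*u3*v4 - 2%:R*u2^+2*u3*v1 - 2%:R*u1*v4^+3 + 2%:R*u1*v3^+3 + 6%:R*u1*v2*v4^+2 - 6%:R*u1*v2*v3^+2 - 2%:R*u1*v2^+2*v4 + 2%:R*u1*v2^+2*v3 - 4%:R*u1*v1*v2*v4 + 4%:R*u1*v1*v2*v3 - 2%:R*u1*u4^+2*v4 + 8%:R*u1*u4^+2*v3 + 2%:R*u1*u4^+2*v2 - 8%:R*u1*u4^+2*v1 - 8%:R*u1*u3*u4*v4 + 8%:R*u1*u3*u4*v3 - 8%:R*u1*u3^+2*v4 + 2%:R*u1*u3^+2*v3 - 2%:R*u1*u3^+2*v2 +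 8%:R*u1*u3^+2*v1 + 4%:R*u1*u2*u4*v4 - 8%:R*u1*u2*u4*v3 + 4%:R*u1*u2*u4*v1 + 8%:R*u1*u2*u3*v4 - 4%:R*u1*u2*u3*v3 - 4%:R*u1*u2*u3*v1 - 2%:R*u1*u2^+2*v4 + 2%:R*u1*u2^+2*v3) * (u2^+2+v2^+2-R2) + (12%:R*u4*v2*R2 - 2%:R*u4*v2*v4^+2 + 4%:R*u4*v2*v3*v4 + 2%:R*u4*v2*v3^+2 - 8%:R*u4*v2^+2*v4 - 4%:R*u4*v2^+2*v3 - 12%:R*u4*v1*R2 + 2%:R*u4*v1*v4^+2 - 4%:R*u4*v1*v3*v4 - 2%:R*u4*v1*v3^+2 + 8%:R*u4*v1*v2^+2 + 8%:R*u4*v1^+2*v4 + 4%:R*u4*v1^+2*v3 - 8%:R*u4*v1^+2*v2 - 2%:R*u4^+3*v2 + 2%:R*u4^+3*v1 + 6%:R*u3*v2*R2 - 2%:R*u3*v2*v4^+2 - 4%:R*u3*v2^+2*v4 - 6%:R*u3*v1*R2 + 2%:R*u3*v1*v4^+2 + 4%:R*u3*v1*v2^+2 + 4%:R*u3*v1^+2*v4 - 4%:R*u3*v1^+2*v2 + 2%:R*u3*u4^+2*v2 - 2%:R*u3*u4^+2*v1 + 2%:R*u3^+2*u4*v2 - 2%:R*u3^+2*u4*v1 - 2%:R*u2*v4^+3 - 2%:R*u2*v3*R2 - 2%:R*u2*v3*v4^+2 - 2%:R*u2*v3^+2*v4 - 8%:R*u2*v2*R2 + 8%:R*u2*v2*v4^+2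 + 4%:R*u2*v2*v3*v4 + 10%:R*u2*v1*R2 + 8%:R*u2*v1*v3*v4 + 2%:R*u2*v1*v3^+2 - 8%:R*u2*v1*v2*v4 - 4%:R*u2*v1*v2*v3 - 8%:R*u2*v1^+2*v4 - 4%:R*u2*v1^+2*v3 + 8%:R*u2*v1^+2*v2 - 2%:R*u2*u4^+2*v4 + 2%:R*u2*u4^+2*v3 - 4%:R*u2*u3*u4*v4 - 4%:R*u2*u3*u4*v2 + 8%:R*u2*u3*u4*v1 - 2%:R*u2*u3^+2*v4 + 2%:R*u2*u3^+2*v1 + 2%:R*u1*v4^+3 + 2%:R*u1*v3*R2 + 2%:R*u1*v3*v4^+2 + 2%:R*u1*v3^+2*v4 - 10%:R*u1*v2*R2 - 8%:R*u1*v2*v3*v4 - 2%:R*u1*v2*v3^+2 + 8%:R*u1*v2^+2*v4 + 4%:R*u1*v2^+2*v3 + 8%:R*u1*v1*R2 - 8%:R*u1*v1*v4^+2 - 4%:R*u1*v1*v3*v4 + 8%:R*u1*v1*v2*v4 + 4%:R*u1*v1*v2*v3 - 8%:R*u1*v1*v2^+2 + 2%:R*u1*u4^+2*v4 - 2%:R*u1*u4^+2*v3 + 4%:R*u1*u3*u4*v4 - 8%:R*u1*u3*u4*v2 + 4%:R*u1*u3*u4*v1 + 2%:R*u1*u3^+2*v4 - 2%:R*u1*u3^+2*v2 + 8%:R*u1*u2*u4*v2 - 8%:R*u1*u2*u4*v1 + 4%:R*u1*u2*u3*v2 - 4%:R*u1*u2*u3*v1) * (u3^+2+v3^+2-R2)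 + (- 8%:R*u4*v2*R2 + 4%:R*u4*v2*v3^+2 + 4%:R*u4*v2^+2*v3 + 8%:R*u4*v1*R2 - 4%:R*u4*v1*v3^+2 - 4%:R*u4*v1*v2^+2 - 4%:R*u4*v1^+2*v3 + 4%:R*u4*v1^+2*v2 - 10%:R*u3*v2*R2 - 2%:R*u3*v2*v4^+2 - 4%:R*u3*v2*v3*v4 + 4%:R*u3*v2^+2*v4 + 8%:R*u3*v2^+2*v3 + 10%:R*u3*v1*R2 + 2%:R*u3*v1*v4^+2 + 4%:R*u3*v1*v3*v4 - 8%:R*u3*v1*v2^+2 - 4%:R*u3*v1^+2*v4 - 8%:R*u3*v1^+2*v3 + 8%:R*u3*v1^+2*v2 - 2%:R*u3*u4^+2*v2 + 2%:R*u3*u4^+2*v1 + 2%:R*u2*v3*R2 + 2%:R*u2*v3*v4^+2 + 4%:R*u2*v3^+2*v4 + 8%:R*u2*v2*R2 - 4%:R*u2*v2*v3*v4 - 8%:R*u2*v2*v3^+2 - 10%:R*u2*v1*R2 - 2%:R*u2*v1*v4^+2 - 8%:R*u2*v1*v3*v4 + 4%:R*u2*v1*v2*v4 + 8%:R*u2*v1*v2*v3 + 4%:R*u2*v1^+2*v4 + 8%:R*u2*v1^+2*v3 - 8%:R*u2*v1^+2*v2 + 2%:R*u2*u4^+2*v3 - 2%:R*u2*u4^+2*v1 + 4%:R*u2*u3*u4*v3 + 4%:R*u2*u3*u4*v2 - 8%:R*u2*u3*u4*v1 - 2%:R*u1*v3*R2 - 2%:R*u1*v3*v4^+2 - 4%:R*u1*v3^+2*v4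 + 10%:R*u1*v2*R2 + 2%:R*u1*v2*v4^+2 + 8%:R*u1*v2*v3*v4 - 4%:R*u1*v2^+2*v4 - 8%:R*u1*v2^+2*v3 - 8%:R*u1*v1*R2 + 4%:R*u1*v1*v3*v4 + 8%:R*u1*v1*v3^+2 - 4%:R*u1*v1*v2*v4 - 8%:R*u1*v1*v2*v3 + 8%:R*u1*v1*v2^+2 - 2%:R*u1*u4^+2*v3 + 2%:R*u1*u4^+2*v2 - 4%:R*u1*u3*u4*v3 + 8%:R*u1*u3*u4*v2 - 4%:R*u1*u3*u4*v1 - 4%:R*u1*u2*u4*v2 + 4%:R*u1*u2*u4*v1 - 8%:R*u1*u2*u3*v2 + 8%:R*u1*u2*u3*v1) * (u4^+2+v4^+2-R2)); [ring | rewrite H1 H2 H3 H4; ring].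
Qed.

Definition shift {R : realFieldType} (c p : pt R) : pt R := (p.1 - c.1, p.2 - c.2).

Lemma sqd_shift (R : realFieldType) (c p q : pt R) : sqd (shift c p) (shift c q) = sqd p q.
Proof. rewrite /sqd /shift /=; ring. Qed.

Lemma S4_shift (R : realFieldType) (c p q r : pt R) :
  S4 (shift c p) (shift c q) (shift c r) = S4 p q r.
Proof. rewrite /S4 /shift /=; ring. Qed.

Theorem corollary2p7 (R : realFieldType) (n : nat) (P : 'I_n.+1 -> pt R) :
  (2 <= n)%N -> cyclic_polygon P -> anticlockwise P ->
  forall a b : 'I_n.+1,
    let a1 := isucc a in let b1 := isucc b in
    let x := fun i j => sqd (P i) (P j) in
    let S := fun i j k => S4 (P i) (P j) (P k) in
    [/\ det3 (x b b1) (S a b b1) (S a1 b b1)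
             (- x a a1) (S a a1 b) (S a a1 b1)
             0 (x a b) (x a1 b1) = 0,
        det3 (x b b1) (S a b b1) (S a1 b b1)
             (x a a1) (S a a1 b1) (S a a1 b)
             0 (x a b1) (x a1 b) = 0 &
        det3 (x a1 b) (S a a1 b) (S a1 b b1)
             (- x a b1) (S a b b1) (S a a1 b1)
             0 (x a b) (x a1 b1) = 0].
Proof.
move=> _ [_ [c [r [_ hc]]]] _ a b a1 b1 x S.
have := @key R (shift c (P a)) (shift c (P a1)) (shift c (P b)) (shift c (P b1)) (r^+2)
  (hc a) (hc a1) (hc b) (hc b1).
by rewrite !sqd_shift !S4_shift.
Qed.
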